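(* Let integers $n \geq 0$, $m \geq 2$ and $k \geq 1$ be given, let $q=(q_1,\dots,q_m)$ be a probability distribution on $\{1,\dots,m\}$, and let $j \in \{1,\dots,m-1\}$. Define $q'$ by $q'_\ell = q_\ell$ for all $\ell \notin \{j,j+1\}$ and \[ q'_j = q_j + q_{j+1} - \|(q_j,q_{j+1})\|_k, \qquad q'_{j+1} = \|(q_j,q_{j+1})\|_k, \] where $\|(a,b)\|_k = (a^k+b^k)^{1/k}$. For a distribution $r$ on $\{1,\dots,m\}$ and $i \in \{1,\dots,m\}$, let $M^{r}_{i}$ denote the maximum load of any bin in $\{i,\dots,m\}$ when $n$ balls are thrown independently into the $m$ bins according to $r$. Then \[ \Pr[M^{q}_{j} < k] \leq \Pr[M^{q'}_{j+1} < k]. \]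
   Context: The load of a bin is the number of balls that landed in it. *)

(* Defs.v *)
From HB Require Import structures.
From mathcomp Require Import all_boot all_order all_algebra.
From mathcomp Require Import reals exp.
Set Implicit Arguments. Unset Strict Implicit. Unset Printing Implicit Defensive.
Import Order.TTheory GRing.Theory Num.Theory.
Local Open Scope ring_scope.

(* Bins are 'I_m (0-based: paper's bin l is our bin l-1); balls are 'I_n.
   An outcome of throwing n balls is f : {ffun 'I_n -> 'I_m}. *)

Definition load (n m : nat) (f : {ffun 'I_n -> 'I_m}) (b : 'I_m) : nat :=
  #|[set t | f t == b]|.

Definition is_distr (R : realType) (m : nat) (r : 'I_m -> R) : Prop :=
  (forall l, 0 <= r l) /\ \sum_(l < m) r l = 1.

Definition prob_maxload_lt (R : realType) (n m : nat) (r : 'I_m -> R)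
    (i k : nat) : R :=
  \sum_(f : {ffun 'I_n -> 'I_m} | [forall b : 'I_m, (i <= b)%N ==> (load f b < k)%N])
    \prod_(t < n) r (f t).

Definition knorm (R : realType) (k : nat) (a b : R) : R :=
  powR (a ^+ k + b ^+ k) (k%:R)^-1.

Definition qprime (R : realType) (m k : nat) (q : 'I_m -> R) (j j1 : 'I_m)
    : 'I_m -> R :=
  fun l => if l == j then q j + q j1 - knorm k (q j) (q j1)
           else if l == j1 then knorm k (q j) (q j1)
           else q l.

(* Main.v *)
Require Import Defs.
From HB Require Import structures.
From mathcomp Require Import all_boot all_order all_algebra.
From mathcomp Require Import reals exp.
From mathcomp Require Import zify ring lra.
Import Order.TTheory GRing.Theory Num.Theory.
Local Open Scope ring_scope.


Section Binom.
Variable R : realType.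

Definition Eb (x y : R) (s i : nat) : R := ('C(s, i))%:R * x ^+ (s - i) * y ^+ i.

Lemma Eb_small x y s i : (s < i)%N -> Eb x y s i = 0.
Proof. by move=> h; rewrite /Eb bin_small // !mul0r. Qed.

Lemma Eb_ge0 x y s i : 0 <= x -> 0 <= y -> 0 <= Eb x y s i.
Proof. by move=> hx hy; rewrite /Eb !mulr_ge0 ?exprn_ge0. Qed.

Lemma Eb_succ x y s i : Eb x y s.+1 i.+1 = y * Eb x y s i + x * Eb x y s i.+1.
Proof.
rewrite /Eb binS natrD subSS.
case: (ltnP i s) => his.
  rewrite -(subnSK his) !exprS.
  move: (x ^+ _) (y ^+ _) ('C(s, i.+1)%:R) ('C(s, i)%:R) => X Y C1 C2; ring.
rewrite (@bin_small s i.+1) // exprS.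
move: (x ^+ _) (x ^+ _) (y ^+ _) ('C(s, i)%:R) => X X' Y C2; ring.
Qed.

Lemma Eb_0 x y s : Eb x y s.+1 0 = x * Eb x y s 0.
Proof. by rewrite /Eb !bin0 !subn0 !expr0 exprS; ring. Qed.

Lemma bump0 i : bump 0 i = i.+1.
Proof. by rewrite /bump leq0n. Qed.

Lemma pascal x y s K (g : nat -> R) :
  \sum_(i < K.+1) Eb x y s.+1 i * g i =
  x * \sum_(i < K.+1) Eb x y s i * g i + y * \sum_(i < K) Eb x y s i * g i.+1.
Proof.
rewrite big_ord_recl [X in x * X]big_ord_recl /=.
under eq_bigr => i _ do rewrite bump0 Eb_succ mulrDl -(mulrA y) -(mulrA x).
under [X in _ = x * (_ + X) + _]eq_bigr => i _ do rewrite bump0.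
rewrite big_split /= -!mulr_sumr Eb_0.
move: (\sum_(i < K) Eb x y s i * g i.+1) (\sum_(i < K) Eb x y s i.+1 * g i.+1) => A B; ring.
Qed.

Variable k' : nat.

Definition Psi x y s := \sum_(i < k'.+1) Eb x y s i.
Definition Phi x y s := \sum_(i < k'.+1) Eb x y s i * ((s - i < k'.+1)%N)%:R.

Lemma Psi_rec x y s : Psi x y s.+1 = (x + y) * Psi x y s - y * Eb x y s k'.
Proof.
rewrite /Psi.
have := pascal x y s k' (fun _ => 1).
under eq_bigr do rewrite mulr1.
under [X in _ = _ + _ * X -> _]eq_bigr do rewrite mulr1.
under [X in _ = _ * X + _ -> _]eq_bigr do rewrite mulr1.
move=> ->; rewrite !big_ord_recr /=.
move: (\sum_(i < k') Eb x y s i) => A; ring.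
Qed.

Lemma Phi_rec x y s : Phi x y s.+1 = (x + y) * Phi x y s
  - x * \sum_(i < k'.+1) Eb x y s i * ((s - i == k')%N)%:R
  - y * (Eb x y s k' * ((s - k' < k'.+1)%N)%:R).
Proof.
rewrite /Phi (pascal x y s k' (fun i => ((s.+1 - i < k'.+1)%N)%:R)) /=.
under [X in _ + _ * X = _]eq_bigr do rewrite subSS.
rewrite [X in _ = _ * X - _ - _]big_ord_recr /=.
have -> : \sum_(i < k'.+1) Eb x y s i * ((s.+1 - i < k'.+1)%N)%:R =
  \sum_(i < k'.+1) Eb x y s i * ((s - i < k'.+1)%N)%:R -
  \sum_(i < k'.+1) Eb x y s i * ((s - i == k')%N)%:R.
  rewrite -sumrB; apply: eq_bigr => i _.
  case: (ltnP s i) => hi; first by rewrite Eb_small // !mul0r subr0.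
  rewrite subSn // ltnS ltnS.
  by case: (ltngtP (s - i) k') => h /=; rewrite ?mulr1 ?mulr0 ?subr0 ?subrr.
rewrite [X in x * (X - _)]big_ord_recr /=.
move: (\sum_(i < k') _) (\sum_(i < k'.+1) _) => A B; ring.
Qed.

Lemma extract x y s : (k' <= s)%N -> (s - k' < k'.+1)%N ->
  \sum_(i < k'.+1) Eb x y s i * ((s - i == k')%N)%:R = Eb x y s (s - k').
Proof.
move=> h1 h2.
rewrite (bigD1 (Ordinal h2)) //= subKn // eqxx mulr1 big1 ?addr0 //.
move=> i /eqP hne.
case e: (s - i == k')%N; last by rewrite mulr0.
case: (ltnP s i) => hi; first by rewrite Eb_small // mul0r.
exfalso; apply: hne; apply: val_inj => /=; move/eqP: e; lia.
Qed.

End Binom.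
Arguments Phi {R}. Arguments Psi {R}. Arguments Eb {R}.



Section Key.
Variable R : realType.
Variable k' : nat.

Lemma key_ineq (a b c : R) : 0 <= a -> 0 <= b -> 0 <= c ->
  c ^+ k'.+1 = a ^+ k'.+1 + b ^+ k'.+1 -> 0 <= a + b - c ->
  a + b - c <= a -> a + b - c <= b ->
  forall s, Phi k' a b s <= Psi k' (a + b - c) c s.
Proof.
move=> ha hb hc hck hd1 hd2 hd3; elim=> [|s IH].
  rewrite /Phi /Psi; apply: ler_sum => i _.
  rewrite sub0n ltn0Sn mulr1.
  case: i => [[|i] hi] /=; first by rewrite /Eb !expr0.
  by rewrite !Eb_small.
case: (leqP (k' + k') s) => hs.
  rewrite /Phi big1; first by apply: sumr_ge0 => i _; exact: Eb_ge0.
  move=> i _; have : (s.+1 - i < k'.+1)%N = false by have := ltn_ord i; lia.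
  by move=> ->; rewrite mulr0.
rewrite Phi_rec Psi_rec subrK.
have hab : 0 <= a + b by lra.
have hX : 0 <= \sum_(i < k'.+1) Eb a b s i * ((s - i == k')%N)%:R.
  by apply: sumr_ge0 => i _; rewrite mulr_ge0 ?Eb_ge0.
have hP := ler_wpM2l hab IH.
case: (ltnP s k') => hsk.
  rewrite !(@Eb_small _ _ _ s k') // !mul0r mulr0 subr0.
  have : 0 <= a * \sum_(i < k'.+1) Eb a b s i * ((s - i == k')%N)%:R by apply: mulr_ge0.
  lra.
rewrite extract //; last by lia.
have -> : (s - k' < k'.+1)%N by lia.
rewrite mulr1 /Eb subKn // bin_sub //.
set C := ('C(s, k'))%:R; set e := (s - k')%N; set D := a + b - c.
have hC : 0 <= C by rewrite /C ler0n.
have h1 : D ^+ e <= a ^+ e by apply: lerXn2r; rewrite ?nnegrE.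
have h2 : D ^+ e <= b ^+ e by apply: lerXn2r; rewrite ?nnegrE.
have ek : c * c ^+ k' = a * a ^+ k' + b * b ^+ k' by rewrite -!exprS.
have hak : 0 <= a * a ^+ k' by rewrite mulr_ge0 ?exprn_ge0.
have hbk : 0 <= b * b ^+ k' by rewrite mulr_ge0 ?exprn_ge0.
have t1 := ler_wpM2r hak h2.
have t2 := ler_wpM2r hbk h1.
have : c * (C * D ^+ e * c ^+ k') <= a * (C * a ^+ k' * b ^+ e) + b * (C * a ^+ e * b ^+ k').
  have -> : c * (C * D ^+ e * c ^+ k') = C * (D ^+ e * (c * c ^+ k')) by ring.
  have -> : a * (C * a ^+ k' * b ^+ e) + b * (C * a ^+ e * b ^+ k') =
     C * (b ^+ e * (a * a ^+ k') + a ^+ e * (b * b ^+ k')) by ring.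
  apply: ler_wpM2l => //; rewrite ek mulrDr; exact: lerD.
move: (a * _) (b * _) (c * _) => X Y Z.
lra.
Qed.

Lemma sum_pow_le (a b : R) n : 0 <= a -> 0 <= b ->
  a ^+ n.+1 + b ^+ n.+1 <= (a + b) ^+ n.+1.
Proof.
move=> ha hb; elim: n => [|n IH]; first by rewrite !expr1.
rewrite [(a + b) ^+ _]exprS.
apply: le_trans (_ : (a + b) * (a ^+ n.+1 + b ^+ n.+1) <= _); last first.
  by apply: ler_wpM2l => //; lra.
have h1 : 0 <= a * b ^+ n.+1 by rewrite mulr_ge0 ?exprn_ge0.
have h2 : 0 <= b * a ^+ n.+1 by rewrite mulr_ge0 ?exprn_ge0.
rewrite !(exprS a n.+1) !(exprS b n.+1).
move: (a ^+ n.+1) (b ^+ n.+1) h1 h2 => A B h1 h2.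
have -> : (a + b) * (A + B) = a * A + b * B + (a * B + b * A) by ring.
lra.
Qed.

Lemma knorm_facts (a b : R) : 0 <= a -> 0 <= b ->
  let c := knorm k'.+1 a b in
  [/\ 0 <= c, c ^+ k'.+1 = a ^+ k'.+1 + b ^+ k'.+1, a <= c, b <= c & c <= a + b].
Proof.
move=> ha hb c.
have hc : 0 <= c by rewrite /c /knorm powR_ge0.
have hA : 0 <= a ^+ k'.+1 + b ^+ k'.+1 by rewrite addr_ge0 ?exprn_ge0.
have hck : c ^+ k'.+1 = a ^+ k'.+1 + b ^+ k'.+1.
  rewrite /c /knorm -powR_mulrn ?powR_ge0 // -powRrM mulVf ?powRr1 //.
  by rewrite pnatr_eq0.
have mono x y : 0 <= x -> 0 <= y -> (x <= y) = (x ^+ k'.+1 <= y ^+ k'.+1).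
  by move=> hx hy; rewrite ler_pXn2r ?nnegrE.
split => //.
- by rewrite mono // hck lerDl exprn_ge0.
- by rewrite mono // hck lerDr exprn_ge0.
- by rewrite mono ?addr_ge0 // hck sum_pow_le.
Qed.

End Key.



Section Decomp.
Variable R : realType.
Variables n m : nat.
Variables j j1 : 'I_m.
Hypothesis hjj : j != j1.

Definition mergej (f : {ffun 'I_n -> 'I_m}) : {ffun 'I_n -> 'I_m} :=
  [ffun t => if f t == j1 then j else f t].
Definition buildj (g : {ffun 'I_n -> 'I_m}) (T : {set 'I_n}) : {ffun 'I_n -> 'I_m} :=
  [ffun t => if t \in T then j1 else g t].
Definition Sg (g : {ffun 'I_n -> 'I_m}) : {set 'I_n} := [set t | g t == j].

Lemma load_merge f b : b != j -> b != j1 -> load (mergej f) b = load f b.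
Proof.
move=> hb hb1; rewrite /load; apply: eq_card => t; rewrite !inE ffunE.
case: (f t =P j1) => [->|_] //.
by rewrite !(eq_sym _ b) (negbTE hb) (negbTE hb1).
Qed.

Lemma prod_const_cond (I : finType) (P : pred I) (x : R) :
  \prod_(i | P i) x = x ^+ #|[set i | P i]|.
Proof. by rewrite -prodr_const; apply: eq_bigl => i; rewrite inE. Qed.

Lemma decomp (r : 'I_m -> R) (P : pred {ffun 'I_n -> 'I_m}) (h : nat -> nat -> bool) :
  (forall f, P (mergej f) = P f) ->
  \sum_(f | P f && h (load f j) (load f j1)) \prod_(t < n) r (f t) =
  \sum_(g | P g && [forall t, g t != j1])
     (\prod_(t < n | g t != j) r (g t)) *
     \sum_(T : {set 'I_n} | (T \subset Sg g) && h (#|Sg g| - #|T|)%N #|T|)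
        (r j ^+ (#|Sg g| - #|T|)%N * r j1 ^+ #|T|).
Proof.
move=> HP.
rewrite (partition_big mergej (fun g => P g && [forall t, g t != j1])); last first.
  move=> f /andP[Pf _]; rewrite HP Pf /=; apply/forallP => t; rewrite ffunE.
  by case: ifP => [_|/negbT //]; rewrite hjj.
apply: eq_bigr => g /andP[Pg /forallP av].
rewrite (reindex_onto (buildj g) (fun f => [set t | f t == j1])); last first.
  move=> f /andP[_ /eqP <-]; apply/ffunP => t; rewrite !ffunE inE.
  by case: (f t =P j1) => [->|].
rewrite big_distrr /=.
have F1 (T : {set 'I_n}) : [set t | buildj g T t == j1] = T.
  apply/setP => t; rewrite inE ffunE; case: (t \in T) => //=.
  - by rewrite eqxx.
  - by rewrite (negbTE (av t)).
have F2 (T : {set 'I_n}) : (mergej (buildj g T) == g) = (T \subset Sg g).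
  apply/eqP/subsetP.
  - move=> e t tT; have := congr1 (fun f : {ffun 'I_n -> 'I_m} => f t) e; rewrite !ffunE tT eqxx => eg.
    by rewrite inE -eg eqxx.
  - move=> sub; apply/ffunP => t; rewrite !ffunE; case tT: (t \in T).
      by rewrite eqxx; have := sub t tT; rewrite inE => /eqP ->.
    by rewrite (negbTE (av t)).
have F4 (T : {set 'I_n}) : T \subset Sg g -> [set t | buildj g T t == j] = Sg g :\: T.
  move=> sub; apply/setP => t; rewrite !inE ffunE; case: (t \in T) => //=.
  by rewrite eq_sym (negbTE hjj).
have F4' (T : {set 'I_n}) : T \subset Sg g -> load (buildj g T) j = (#|Sg g| - #|T|)%N.
  by move=> sub; rewrite /load F4 // cardsD (setIidPr sub).
have F3 (T : {set 'I_n}) : load (buildj g T) j1 = #|T| by rewrite /load F1.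
apply: eq_big => T.
  rewrite F1 eqxx andbT F2.
  case: (boolP (T \subset Sg g)) => sub; last by rewrite andbF.
  have e : mergej (buildj g T) = g by apply/eqP; rewrite F2.
  by rewrite -HP e Pg F3 F4' // andbT.
move=> /andP[/andP[_ /eqP e] _].
have sub : T \subset Sg g by rewrite -F2 e.
rewrite (bigID (fun t => g t == j)) /= mulrC; congr (_ * _).
  apply: eq_bigr => t hne; rewrite ffunE; case: ifP => // tT.
  by have := subsetP sub t tT; rewrite inE (negbTE hne).
rewrite (bigID (fun t => t \in T)) /= mulrC.
rewrite (eq_bigr (fun _ => r j)); last first.
  by move=> t /andP[/eqP gt tT]; rewrite ffunE (negbTE tT) gt.
rewrite [X in _ * X](eq_bigr (fun _ => r j1)); last first.
  by move=> t /andP[_ tT]; rewrite ffunE tT.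
rewrite !prod_const_cond; congr (_ ^+ _ * _ ^+ _).
  have -> : (#|Sg g| - #|T|)%N = #|Sg g :\: T| by rewrite cardsD (setIidPr sub).
  apply: eq_card => t.
  by rewrite !inE andbC.
apply: eq_card => t; rewrite !inE; case tT: (t \in T); rewrite ?andbF //=.
by have := subsetP sub t tT; rewrite inE => ->.
Qed.

End Decomp.

Section Subsets.
Variable R : realType.

Lemma sum_const_cond (I : finType) (P : pred I) (x : R) :
  \sum_(i | P i) x = x *+ #|[set i | P i]|.
Proof. by rewrite -sumr_const; apply: eq_bigl => i; rewrite inE. Qed.

Lemma subsets_binom (I : finType) (S : {set I}) (h : nat -> nat -> bool) (G : nat -> R) k' :
  (forall u v, h u v -> (v < k'.+1)%N) ->
  \sum_(T : {set I} | (T \subset S) && h (#|S| - #|T|)%N #|T|) G #|T| =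
  \sum_(i < k'.+1) ('C(#|S|, i))%:R * G i * (h (#|S| - i)%N i)%:R.
Proof.
move=> Hh.
rewrite (partition_big (fun T : {set I} => inord #|T| : 'I_k'.+1) xpredT) //.
apply: eq_bigr => i _.
case hh: (h (#|S| - i)%N i); last first.
  rewrite mulr0 big_pred0 // => T.
  case: (eqVneq #|T| i) => [e|ne]; first by rewrite e hh andbF.
  case hT: (h _ _); rewrite ?andbF //= andbT.
  have lt := Hh _ _ hT.
  by apply/negbTE; rewrite -val_eqE /= inordK // (negbTE ne) andbF.
have -> : (true%:R : R) = 1 by [].
rewrite mulr1.
transitivity (\sum_(T : {set I} | (T \subset S) && (#|T| == i)) G i).
  apply: eq_big => T.
    case: (eqVneq #|T| i) => [e|ne].
      by rewrite e hh andbT inord_val eqxx andbT.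
    case hT: (h _ _); rewrite ?andbF //= andbT.
    have lt := Hh _ _ hT.
    by apply/negbTE; rewrite -val_eqE /= inordK // (negbTE ne) andbF.
  move=> /andP[/andP[_ hT] /eqP e]; have lt := Hh _ _ hT.
  by rewrite -e inordK.
by rewrite sum_const_cond cards_draws mulr_natl.
Qed.
End Subsets.



Theorem lemma12 (R : realType) (n m k : nat) (q : 'I_m -> R) (j j1 : 'I_m) :
  (2 <= m)%N -> (1 <= k)%N -> is_distr q ->
  nat_of_ord j1 = (nat_of_ord j).+1 ->
  prob_maxload_lt n q j k <= prob_maxload_lt n (qprime k q j j1) j1 k.
Proof.
move=> _ hk [q0 _] hj1.
case: k hk => // k' _.
have hjj : j != j1.
  by apply/eqP => e; move: hj1; rewrite e; lia.
have := @knorm_facts R k' (q j) (q j1) (q0 j) (q0 j1).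
move=> /= [hc0 hck hac hbc hcab].
set c := knorm k'.+1 (q j) (q j1) in hc0 hck hac hbc hcab *.
pose P := fun f : {ffun 'I_n -> 'I_m} =>
  [forall b0 : 'I_m, ((j < b0)%N && (b0 != j1)) ==> (load f b0 < k'.+1)%N].
have HP : forall f, P (@mergej n m j j1 f) = P f.
  move=> f; apply: eq_forallb => b0.
  case hb: ((j < b0)%N && (b0 != j1)) => //=.
  move/andP: hb => [hb1 hb2]; rewrite load_merge //.
  by rewrite -val_eqE /= neq_ltn hb1 orbT.
pose h1 := fun u v : nat => (u < k'.+1)%N && (v < k'.+1)%N.
pose h2 := fun u v : nat => (v < k'.+1)%N.
rewrite /prob_maxload_lt.
rewrite (eq_bigl (fun f => P f && h1 (load f j) (load f j1))); last first.
  move=> f; apply/forallP/andP.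
  - move=> H; split.
      apply/forallP => b0; apply/implyP => /andP[hb _].
      exact: (implyP (H b0) (ltnW hb)).
    rewrite /h1 (implyP (H j) (leqnn _)) (implyP (H j1) _) //.
    by rewrite hj1 leqnSn.
  - move=> [/forallP HP' /andP[hj hj1']] b0; apply/implyP => hb.
    case: (eqVneq b0 j) => [->//|nj]; case: (eqVneq b0 j1) => [->//|nj1].
    apply: (implyP (HP' b0)); rewrite nj1 andbT ltn_neqAle hb andbT.
    by rewrite val_eqE eq_sym.
rewrite [X in _ <= X](eq_bigl (fun f => P f && h2 (load f j) (load f j1))); last first.
  move=> f; apply/forallP/andP.
  - move=> H; split; last exact: (implyP (H j1) (leqnn _)).
    apply/forallP => b0; apply/implyP => /andP[hb _].
    by apply: (implyP (H b0)); rewrite hj1.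
  - move=> [/forallP HP' hl] b0; apply/implyP => hb.
    case: (eqVneq b0 j1) => [->//|nj1].
    apply: (implyP (HP' b0)); rewrite nj1 andbT.
    by rewrite hj1 in hb.
rewrite (@decomp R n m j j1 hjj q P h1 HP) (@decomp R n m j j1 hjj _ P h2 HP).
apply: ler_sum => g /andP[_ /forallP av].
have -> : \prod_(t < n | g t != j) qprime k'.+1 q j j1 (g t) =
          \prod_(t < n | g t != j) q (g t).
  by apply: eq_bigr => t hne; rewrite /qprime (negbTE hne) (negbTE (av t)).
apply: ler_wpM2l; first by apply: prodr_ge0 => t _.
have eqj : qprime k'.+1 q j j1 j = q j + q j1 - c by rewrite /qprime eqxx.
have eqj1 : qprime k'.+1 q j j1 j1 = c.
  by rewrite /qprime eq_sym (negbTE hjj) eqxx.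
rewrite eqj eqj1.
set S := Sg _ _ j g.
rewrite (@subsets_binom R _ S h1 (fun v => q j ^+ (#|S| - v) * q j1 ^+ v) k'); last first.
  by move=> u v /andP[].
rewrite (@subsets_binom R _ S h2 (fun v => (q j + q j1 - c) ^+ (#|S| - v) * c ^+ v) k'); last first.
  by [].
have -> : \sum_(i < k'.+1) ('C(#|S|, i))%:R * (q j ^+ (#|S| - i) * q j1 ^+ i) *
   (h1 (#|S| - i)%N i)%:R = Phi k' (q j) (q j1) #|S|.
  by rewrite /Phi; apply: eq_bigr => i _; rewrite /h1 ltn_ord andbT /Eb mulrA.
have -> : \sum_(i < k'.+1) ('C(#|S|, i))%:R * ((q j + q j1 - c) ^+ (#|S| - i) * c ^+ i) *
   (h2 (#|S| - i)%N i)%:R = Psi k' (q j + q j1 - c) c #|S|.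
  by rewrite /Psi; apply: eq_bigr => i _; rewrite /h2 ltn_ord mulr1 /Eb mulrA.
apply: key_ineq => //; lra.
Qed.
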